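(* If $U$ is an atemporal action model over $L_{\mathsf{YDEL}}$, then $U^\sharp$ is an action model over $L_{\mathsf{RDETL}}$ of the kind allowed in $L_{\mathsf{RDETL}}$, i.e. $U^\sharp\in\mathsf{Act}(L_{\mathsf{RDETL}})$.
   Context: Fix a nonempty finite set $\mathsf{Agt}$ of agents and a nonempty set $\mathsf{Prop}$ of letters. Kripke models $M=(W^M,(\to^M_a)_a,\leadsto^M,V^M)$: nonempty $W^M$, binary relations $\to^M_a,\leadsto^M$, valuation $V^M:\mathsf{Prop}\to\mathcal P(W^M)$. Action models over a set of formulas $F$: $U=(W^U,(\to^U_a)_a,\leadsto^U,\mathrm{pre}^U)$ with $W^U$ nonempty finite, binary relations, $\mathrm{pre}^U:W^U\to F$; atemporal means $\leadsto^U=\emptyset$; $s$ is a past state if no $s'\leadsto^Us$. $L_{\mathsf{DETL}}$: $\varphi::=p\mid\neg\varphi\mid\varphi\wedge\varphi\mid\Box_a\varphi\mid[Y]\varphi\mid[U,s]\varphi$ with $(U,s)$ any pointed action model over $L_{\mathsf{DETL}}$; semantics: Boolean standard, $\Box_a$ over $\to^M_a$-successors, $[Y]$ over $\leadsto^M$-predecessors, and $M,w\models[U,s]\varphi$ iff $M,w\models\mathrm{pre}^U(s)$ implies $M[U],(w,s)\models\varphi$, where $M[U]$ has worlds $\{(v,t):M,v\models\mathrm{pre}^U(t)\}$, $(v,t)\to_a(v',t')$ iff $v\to^M_av'$ and $t\to^U_at'$, $(v',t')\leadsto(v,t)$ iff ($v'\leadsto^Mv$, $t'=t$, $t$ past state)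 or ($v'=v$, $t'\leadsto^Ut$), valuation inherited from $M$; $\models\varphi$ means truth at all pointed Kripke models. $L_{\mathsf{YDEL}}$ is the fragment of $L_{\mathsf{DETL}}$ in which all action models used (recursively) are atemporal; the symbol $\flat$ is never a world or event of it. Progressions, histories, depth: a progression is a finite nonempty $x_0,\dots,x_n$ with $x_i\leadsto x_{i+1}$; a history cannot be extended at its beginning; $\mathrm{depth}(x)$ is the maximal length of a history ending at $x$ ($\infty$ if none). Action model properties: depth-definedness (all depths finite); knowledge of the past ($w'\leadsto w\to_av$ implies $\exists v'\leadsto v$); knowledge of the initial time ($w\to_av$ and no $w'\leadsto w$ imply no $v'\leadsto v$); uniqueness of the past; perfect recall ($w\leadsto v\to_av'$ implies $\exists w'$, $w\to_aw'\leadsto v'$); history preservation ($s'\leadsto^Us$ implies $\models\mathrm{pre}^U(s)\to\mathrm{pre}^U(s')$, and every past state is an epistemic past state, i.e. a past state with valid precondition whose only outgoing epistemic arrows are the loops $s\to_as$ for each $a$). $L_{\mathsf{RDETL}}$ is the sublanguage of $L_{\mathsf{DETL}}$ allowing only $[U,s]$ with $U$ having preconditions (recursively) in $L_{\mathsf{RDETL}}$ and satisfying depth-definedness, knowledge of the past, history preservation, knowledge of the initial time, uniqueness of the past and perfect recall; $\mathsf{Act}(L_{\mathsf{RDETL}})$ denotes the set of such action models. Translation $\sharp$: $\bot^\sharp=\bot$, $p^\sharp=p$, $\sharp$ commutes with $\neg$, $\wedge$, $\Box_a$, $[Y]$, and $([U,s]\varphi)^\sharp=[U^\sharp,s]\varphi^\sharp$,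 where $W^{U^\sharp}=W^U\cup\{\flat\}$; $s\to^{U^\sharp}_as'$ iff $s\to^U_as'$ or $s=s'=\flat$; $s\leadsto^{U^\sharp}s'$ iff $s=\flat$ and $s'\in W^U$; $\mathrm{pre}^{U^\sharp}(s)=\mathrm{pre}^U(s)^\sharp$ for $s\in W^U$ and $\mathrm{pre}^{U^\sharp}(\flat)=\top$. *)

(* Defs.v *)
From mathcomp Require Import all_boot.
Set Implicit Arguments. Unset Strict Implicit. Unset Printing Implicit Defensive.

Section DETL.
Variables (A : finType) (P : Type) .

(* Formulas of L_DETL.  [Dyn n acc tmp pre s phi] is [U,s]phi where U has
   events 'I_n.+1 (finite, nonempty), epistemic relations acc, temporal
   relation tmp and preconditions pre. *)
Inductive form : Type :=
| Var of P
| Neg of form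
| And of form & form
| Box of A & form
| Yest of form
| Dyn (n : nat) (acc : A -> 'I_n.+1 -> 'I_n.+1 -> Prop)
      (tmp : 'I_n.+1 -> 'I_n.+1 -> Prop) (pre : 'I_n.+1 -> form)
      (s : 'I_n.+1) (phi : form).

Definition Imp (f g : form) : form := Neg (And f (Neg g)).
Definition bot (p0 : P) : form := And (Var p0) (Neg (Var p0)).
Definition top (p0 : P) : form := Neg (bot p0).

Record amodel := AM {
  asz : nat;
  aacc : A -> 'I_asz.+1 -> 'I_asz.+1 -> Prop;
  atmp : 'I_asz.+1 -> 'I_asz.+1 -> Prop;
  apre : 'I_asz.+1 -> form }.

Record kmodel := KM {
  kW : Type;
  kacc : A -> kW -> kW -> Prop;
  ktmp : kW -> kW -> Prop;
  kval : P -> kW -> Prop }.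

Definition pastst {E : Type} (tmp : E -> E -> Prop) (s : E) : Prop :=
  ~ exists s', tmp s' s.

(* product update M[U]; Pre t v stands for  M,v |= pre(t) *)
Definition prodm (M : kmodel) (n : nat) (acc : A -> 'I_n.+1 -> 'I_n.+1 -> Prop)
  (tmp : 'I_n.+1 -> 'I_n.+1 -> Prop) (Pre : 'I_n.+1 -> kW M -> Prop) : kmodel :=
  {| kW := {x : kW M * 'I_n.+1 | Pre x.2 x.1};
     kacc := fun a x y => @kacc M a (sval x).1 (sval y).1 /\ acc a (sval x).2 (sval y).2;
     ktmp := fun x y =>
       (@ktmp M (sval x).1 (sval y).1 /\ (sval x).2 = (sval y).2 /\ pastst tmp (sval y).2)
       \/ ((sval x).1 = (sval y).1 /\ tmp (sval x).2 (sval y).2);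
     kval := fun p x => @kval M p (sval x).1 |}.

Fixpoint sat (phi : form) : forall M : kmodel, kW M -> Prop :=
  match phi with
  | Var p => fun M w => @kval M p w
  | Neg f => fun M w => ~ @sat f M w
  | And f g => fun M w => @sat f M w /\ @sat g M w
  | Box a f => fun M w => forall v, @kacc M a w v -> @sat f M v
  | Yest f => fun M w => forall v, @ktmp M v w -> @sat f M v
  | Dyn n acc tmp pre s f => fun M w =>
      forall H : @sat (pre s) M w,
        @sat f (@prodm M n acc tmp (fun t v => @sat (pre t) M v)) (exist _ (w, s) H)
  end.

Definition valid (f : form) : Prop := forall (M : kmodel) (w : kW M), @sat f M w.

Fixpoint chain {E : Type} (R : E -> E -> Prop) (x : E) (l : seq E) : Prop :=
  match l with
  | [::] => True
  | y :: l' => R x y /\ chain R y l'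
  end.

Definition history {E : Type} (R : E -> E -> Prop) (x : E) (l : seq E) : Prop :=
  chain R x l /\ ~ (exists y, R y x).

Definition depth_finite {E : Type} (R : E -> E -> Prop) (z : E) : Prop :=
  exists N : nat,
    (exists x l, history R x l /\ last x l = z /\ (size l).+1 = N) /\
    (forall x l, history R x l -> last x l = z -> (size l).+1 <= N).

Section Props.
Variables (E : Type) (acc : A -> E -> E -> Prop) (tmp : E -> E -> Prop) (pre : E -> form).

Definition depth_defined := forall x, depth_finite tmp x.
Definition knowledge_of_past :=
  forall a w' w v, tmp w' w -> acc a w v -> exists v', tmp v' v.
Definition knowledge_of_initial_time :=
  forall a w v, acc a w v -> pastst tmp w -> pastst tmp v.
Definition uniqueness_of_past := forall w w' v, tmp w v -> tmp w' v -> w = w'.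
Definition perfect_recall :=
  forall a w v v', tmp w v -> acc a v v' -> exists w', acc a w w' /\ tmp w' v'.
Definition epistemic_past_state (s : E) :=
  pastst tmp s /\ valid (pre s) /\ forall a, acc a s s /\ (forall t, acc a s t -> t = s).
Definition history_preserving :=
  (forall s' s, tmp s' s -> valid (Imp (pre s) (pre s'))) /\
  (forall s, pastst tmp s -> epistemic_past_state s).

Definition RDETL_conditions :=
  depth_defined /\ knowledge_of_past /\ history_preserving /\
  knowledge_of_initial_time /\ uniqueness_of_past /\ perfect_recall.
End Props.

Fixpoint inRDETL (phi : form) : Prop :=
  match phi with
  | Var _ => True
  | Neg f => inRDETL f
  | And f g => inRDETL f /\ inRDETL g
  | Box _ f => inRDETL f
  | Yest f => inRDETL f
  | Dyn n acc tmp pre s f =>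
      (forall t, inRDETL (pre t)) /\ RDETL_conditions acc tmp pre /\ inRDETL f
  end.

Definition atemporal (U : amodel) : Prop := forall t t', ~ @atmp U t t'.

Fixpoint inYDEL (phi : form) : Prop :=
  match phi with
  | Var _ => True
  | Neg f => inYDEL f
  | And f g => inYDEL f /\ inYDEL g
  | Box _ f => inYDEL f
  | Yest f => inYDEL f
  | Dyn n acc tmp pre s f =>
      (forall t t', ~ tmp t t') /\ (forall t, inYDEL (pre t)) /\ inYDEL f
  end.

Definition in_Act_RDETL (U : amodel) : Prop :=
  (forall t, inRDETL (@apre U t)) /\ RDETL_conditions (@aacc U) (@atmp U) (@apre U).

(* the translation #: events of U# are 'I_n.+2, the old event t being
   widen t and flat being ord_max *)
Definition wid {n : nat} (t : 'I_n.+1) : 'I_n.+2 := widen_ord (leqnSn n.+1) t.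

Definition sharp_acc {n : nat} (acc : A -> 'I_n.+1 -> 'I_n.+1 -> Prop)
  (a : A) (t t' : 'I_n.+2) : Prop :=
  (exists u u', t = wid u /\ t' = wid u' /\ acc a u u') \/ (t = ord_max /\ t' = ord_max).

Definition sharp_tmp {n : nat} (t t' : 'I_n.+2) : Prop :=
  t = ord_max /\ exists u : 'I_n.+1, t' = wid u.

Variable p0 : P.

Fixpoint sharp (phi : form) : form :=
  match phi with
  | Var p => Var p
  | Neg f => Neg (sharp f)
  | And f g => And (sharp f) (sharp g)
  | Box a f => Box a (sharp f)
  | Yest f => Yest (sharp f)
  | Dyn n acc tmp pre s f =>
      Dyn (n := n.+1) (sharp_acc acc) (@sharp_tmp n)
        (fun t : 'I_n.+2 => if val t < n.+1 then sharp (pre (inord (val t))) else top p0)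
        (wid s) (sharp f)
  end.

Definition sharp_am (U : amodel) : amodel :=
  {| asz := (asz U).+1;
     aacc := sharp_acc (@aacc U);
     atmp := @sharp_tmp (asz U);
     apre := fun t => if val t < (asz U).+1 then sharp (@apre U (inord (val t))) else top p0 |}.

End DETL.

(* Main.v *)
Require Import Defs.
From mathcomp Require Import all_boot.
Set Implicit Arguments. Unset Strict Implicit.

Section L.
Variables (A : finType) (P : Type) (p0 : P).

Lemma wid_neq n (u : 'I_n.+1) : wid u <> ord_max.
Proof. move=> /(congr1 val) /= H. by move: (ltn_ord u); rewrite H ltnn. Qed.

Lemma ord_cases n (t : 'I_n.+2) : t = ord_max \/ exists u : 'I_n.+1, t = wid u.
Proof.
case: (ltnP t n.+1) => H.
- right; exists (inord t); apply: ord_inj => /=; by rewrite inordK.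
- left; apply: ord_inj => /=; apply/eqP; rewrite eqn_leq H andbT -ltnS; exact: (ltn_ord t).
Qed.

Lemma past_max n (s : 'I_n.+2) : pastst (@sharp_tmp n) s -> s = ord_max.
Proof.
move=> H; destruct (ord_cases s) as [Hm|[u Hu]]; first exact Hm; exfalso; apply: H; exists (@ord_max n.+1); split=> //; by exists u.
Qed.

Lemma top_valid : valid (top A p0).
Proof. move=> M w /= [H1 H2]; exact: H2. Qed.

Lemma chain_small n (x : 'I_n.+2) l : chain (@sharp_tmp n) x l ->
  l = [::] \/ (x = ord_max /\ exists u, l = [:: wid u]).
Proof.
case: l => [|y [|z l]] /=; [by left| |].
- move=> [[-> [u ->]] _]; right; split=> //; by exists u.
- move=> [[_ [u ->]] [[H _] _]]; by case: (wid_neq H).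
Qed.

Lemma conds n (acc : A -> 'I_n.+1 -> 'I_n.+1 -> Prop) (pre : 'I_n.+2 -> form A P) :
  pre ord_max = top A p0 ->
  RDETL_conditions (sharp_acc acc) (@sharp_tmp n) pre.
Proof.
move=> Hpre.
have accw : forall a t t', sharp_acc acc a t t' -> t <> ord_max -> exists u', t' = wid u'.
  move=> a t t' [[u [u' [_ [-> _]]]]|[-> _]] //; by exists u'.
have accm : forall a t', sharp_acc acc a ord_max t' -> t' = ord_max.
  move=> a t' [[u [u' [H _]]]|[_ ->]] //; by case: (wid_neq (esym H)).
split; [|split; [|split; [|split; [|split]]]].
- move=> z; exists (if z == ord_max then 1 else 2); split.
  + case: eqP => [->|Hz].
    * exists ord_max, [::]; split=> //; split=> // [[y [_ [u Hu]]]]; by case: (wid_neq (esym Hu)).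
    * destruct (ord_cases z) as [Hm|[u Hu]]; first by case: (Hz Hm).
      exists ord_max, [:: z]; split=> //; split.
      -- split=> //; split=> //; by exists u.
      -- move=> [y [_ [v Hv]]]; by case: (wid_neq (esym Hv)).
  + move=> x l [Hc _] Hl.
    move: Hl; case: (chain_small Hc) => [->|[_ [u ->]]] /=.
    * by move=> _; case: eqP.
    * move=> <-; case: eqP => // H; by case: (wid_neq H).
- move=> a w' w v [_ [u ->]] Hacc.
  have [u' ->] := accw _ _ _ Hacc (@wid_neq _ u).
  exists ord_max; split=> //; by exists u'.
- split.
  + move=> s' s [-> _]; rewrite Hpre => M w /= [_ H]; apply: H; exact: top_valid.
  + move=> s Hs; have Hm := past_max Hs; subst s.
    split=> //; split; first by rewrite Hpre; exact: top_valid.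
    move=> a; split; first by right.
    move=> t; exact: accm.
- move=> a w v Hacc Hw; have Hm := past_max Hw; subst w.
  rewrite (accm _ _ Hacc) => [[y [_ [u Hu]]]]; by case: (wid_neq (esym Hu)).
- by move=> w w' v [-> _] [-> _].
- move=> a w v v' [-> [u ->]] Hacc.
  have [u' ->] := accw _ _ _ Hacc (@wid_neq _ u).
  exists ord_max; split; first by right.
  split=> //; by exists u'.
Qed.

Lemma pre_max n (pre : 'I_n.+1 -> form A P) :
  (fun t : 'I_n.+2 => if val t < n.+1 then sharp p0 (pre (inord (val t))) else top A p0)
    ord_max = top A p0.
Proof. by rewrite /= ltnn. Qed.

Lemma ydel_rdetl (phi : form A P) : inYDEL phi -> inRDETL (sharp p0 phi).
Proof.
elim: phi => //=.
- move=> f IHf g IHg [H1 H2]; split; auto.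
- move=> n acc tmp pre IH s f IHf [_ [Hp Hf]]; split; last split.
  + move=> t; case: ifP => _ /=; first exact: IH. by [].
  + apply: conds; exact: pre_max.
  + exact: IHf.
Qed.

End L.

Theorem lemma30 (A : finType) (P : Type) (p0 : P) (hA : 0 < #|A|)
  (U : amodel A P) :
  atemporal U -> (forall t, inYDEL (@apre A P U t)) ->
  in_Act_RDETL (sharp_am p0 U).
Proof.
move=> _ HU; split.
- move=> t /=; case: ifP => _ /=; first exact: ydel_rdetl. by [].
- apply: conds; by rewrite /= ltnn.
Qed.
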